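(* Let $\mathcal{C}$ be a Fraïssé class of finite structures over a finite relational language, and let $M$ be its Fraïssé limit. Assume that every structure in $\mathcal{C}$ is rigid (has trivial automorphism group). Then at least one of the following holds: (a) $M$ has a reduct which is a total order, i.e. there is a strict total order on the domain of $M$ that is definable in $M$ by a first-order formula without parameters; (b) there are structures $A,B\in\mathcal{C}$ with $|A|=2$ which witness that $\mathcal{C}$ is not a Ramsey class, i.e. for every $C\in\mathcal{C}$ there is a colouring of the embeddings $A\to C$ with two colours such that no embedding $g:B\to C$ is monochromatic.
   Context: All structures are non-empty, and classes are closed under isomorphism and hereditary (closed under induced substructures). A Fraïssé class is such a class satisfying the joint embedding property (any two members embed in a common member) and the amalgamation property (for $A,B_1,B_2\in\mathcal{C}$ and embeddings $f_i:A\to B_i$ there exist $C\in\mathcal{C}$ and embeddings $g_i:B_i\to C$ with $g_1\circ f_1=g_2\circ f_2$). Its Fraïssé limit is the unique countable homogeneous structure whose age (class of finite structures embeddable in it) is $\mathcal{C}$; homogeneous means every isomorphism between finite substructures extends to an automorphism. An embedding $g:B\to C$ is monochromatic for a colouring of the embeddings $A\to C$ if all embeddings $A\to C$ whose image is contained in the image of $g$ receive the same colour. $\mathcal{C}$ is a Ramsey class if for all $A,B\in\mathcal{C}$ there is $C\in\mathcal{C}$ such that every $2$-colouring of the embeddings $A\to C$ admits a monochromatic embedding $B\to C$. *)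

(* Defs.v *)
From mathcomp Require Import all_boot.
Set Implicit Arguments. Unset Strict Implicit. Unset Printing Implicit Defensive.

Section FirstOrder.
Variables (L : finType) (ar : L -> nat).

Record struct := Struct {
  car : Type;
  srel : forall s : L, ('I_(ar s) -> car) -> Prop }.

Definition embedding (A B : struct) (f : car A -> car B) : Prop :=
  injective f /\ forall (s : L) (t : 'I_(ar s) -> car A), srel t <-> srel (f \o t).

Definition isomorphism (A B : struct) (f : car A -> car B) : Prop :=
  embedding f /\ bijective f.

Definition automorphism (A : struct) (f : car A -> car A) : Prop :=
  isomorphism f.

Definition rigid (A : struct) : Prop :=
  forall f : car A -> car A, automorphism f -> forall x, f x = x.

Definition finite_set (T : Type) (S : T -> Prop) : Prop :=
  exists n (g : 'I_n -> T), forall x, S x -> exists i, g i = x.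

Definition finite_struct (A : struct) : Prop := finite_set (fun _ : car A => True).
Definition nonempty_struct (A : struct) : Prop := inhabited (car A).
Definition countable_struct (A : struct) : Prop :=
  exists f : car A -> nat, injective f.

Definition two_elements (A : struct) : Prop :=
  exists a b : car A, a <> b /\ forall x, x = a \/ x = b.

Definition iso_closed (C : struct -> Prop) : Prop :=
  forall A B (f : car A -> car B), C A -> isomorphism f -> C B.

Definition hereditary (C : struct -> Prop) : Prop :=
  forall A B (f : car A -> car B), C B -> nonempty_struct A -> embedding f -> C A.

Definition JEP (C : struct -> Prop) : Prop :=
  forall A B, C A -> C B -> exists D, C D /\
    (exists f : car A -> car D, embedding f) /\ (exists g : car B -> car D, embedding g).

Definition AP (C : struct -> Prop) : Prop :=
  forall A B1 B2 (f1 : car A -> car B1) (f2 : car A -> car B2),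
    C A -> C B1 -> C B2 -> embedding f1 -> embedding f2 ->
    exists D (g1 : car B1 -> car D) (g2 : car B2 -> car D),
      C D /\ embedding g1 /\ embedding g2 /\ forall a, g1 (f1 a) = g2 (f2 a).

Definition fraisse_class (C : struct -> Prop) : Prop :=
  (forall A, C A -> finite_struct A /\ nonempty_struct A) /\
  iso_closed C /\ hereditary C /\ JEP C /\ AP C.

Definition age_is (M : struct) (C : struct -> Prop) : Prop :=
  forall A, C A <-> (finite_struct A /\ nonempty_struct A /\
                     exists f : car A -> car M, embedding f).

Definition partial_iso (M : struct) (S T : car M -> Prop) (p : car M -> car M) : Prop :=
  (forall x, S x -> T (p x)) /\
  (forall x y, S x -> S y -> p x = p y -> x = y) /\
  (forall y, T y -> exists x, S x /\ p x = y) /\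
  (forall (s : L) (t : 'I_(ar s) -> car M), (forall i, S (t i)) ->
      (srel t <-> srel (p \o t))).

Definition homogeneous (M : struct) : Prop :=
  forall (S T : car M -> Prop) (p : car M -> car M),
    finite_set S -> finite_set T -> partial_iso S T p ->
    exists sigma : car M -> car M, automorphism sigma /\ forall x, S x -> sigma x = p x.

Definition fraisse_limit (C : struct -> Prop) (M : struct) : Prop :=
  countable_struct M /\ homogeneous M /\ age_is M C.

Inductive formula : Type :=
  | FRel (s : L) (v : 'I_(ar s) -> nat)
  | FEq (i j : nat)
  | FNot (phi : formula)
  | FAnd (phi psi : formula)
  | FOr (phi psi : formula)
  | FImp (phi psi : formula)
  | FEx (i : nat) (phi : formula)
  | FAll (i : nat) (phi : formula).

Definition update (T : Type) (e : nat -> T) (i : nat) (a : T) : nat -> T :=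
  fun n => if n == i then a else e n.

Fixpoint sat (M : struct) (e : nat -> car M) (phi : formula) : Prop :=
  match phi with
  | FRel s v => srel (fun k => e (v k))
  | FEq i j => e i = e j
  | FNot p => ~ sat e p
  | FAnd p q => sat e p /\ sat e q
  | FOr p q => sat e p \/ sat e q
  | FImp p q => sat e p -> sat e q
  | FEx i p => exists a, sat (update e i a) p
  | FAll i p => forall a, sat (update e i a) p
  end.

Definition env2 (T : Type) (x y : T) : nat -> T :=
  fun n => if n is 0 then x else y.

Definition strict_total_order (T : Type) (R : T -> T -> Prop) : Prop :=
  (forall x, ~ R x x) /\
  (forall x y z, R x y -> R y z -> R x z) /\
  (forall x y, x <> y -> R x y \/ R y x).

Definition has_definable_total_order (M : struct) : Prop :=
  exists phi : formula,
    strict_total_order (fun x y : car M => sat (env2 x y) phi).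

Definition not_ramsey_witness (C : struct -> Prop) (A B : struct) : Prop :=
  forall D, C D ->
    exists chi : (car A -> car D) -> bool,
      forall g : car B -> car D, embedding g ->
        exists f1 f2 : car A -> car D,
          embedding f1 /\ embedding f2 /\
          (forall a, exists b, f1 a = g b) /\ (forall a, exists b, f2 a = g b) /\
          chi f1 <> chi f2.

End FirstOrder.

(* Main.v *)
Require Import Defs.
From mathcomp Require Import all_boot.
From Stdlib Require Import Classical ClassicalEpsilon FunctionalExtensionality ProofIrrelevance.
From Stdlib Require List.
Set Implicit Arguments. Unset Strict Implicit. Unset Printing Implicit Defensive.

Definition bdec (P : Prop) : bool :=
  if excluded_middle_informative P then true else false.
Lemma bdec_true (P : Prop) : bdec P = true <-> P.
Proof. rewrite /bdec; case: excluded_middle_informative => //. Qed.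
Lemma bdec_false (P : Prop) : bdec P = false <-> ~ P.
Proof. rewrite /bdec; case: excluded_middle_informative => //. Qed.
Lemma bdec_eq (P Q : Prop) : (P <-> Q) -> bdec P = bdec Q.
Proof. move=> h; rewrite /bdec; do 2 case: excluded_middle_informative => // *; (exfalso; tauto) || tauto. Qed.
Lemma bdec_eqP (P Q : Prop) : bdec P = bdec Q -> (P <-> Q).
Proof. move=> E; have h1 := bdec_true P; have h2 := bdec_true Q; rewrite E in h1; tauto. Qed.

Section Dev.
Variables (L : finType) (ar : L -> nat).

Definition K : finType := {s : L & {ffun 'I_(ar s) -> bool}}.
Definition T : finType := {ffun K -> bool}.

Definition pat (X : Type) n (w : 'I_n -> bool) (x y : X) : 'I_n -> X :=
  fun j => if w j then x else y.

Definition typ (A : struct ar) (x y : car A) : T :=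
  [ffun k : K => bdec (srel (pat (tagged k) x y))].

Lemma typP (A B : struct ar) (x y : car A) (u v : car B) :
  typ x y = typ u v <-> forall s (w : 'I_(ar s) -> bool),
     (srel (pat w x y) <-> srel (pat w u v)).
Proof.
split.
- move=> E s w.
  have := congr1 (fun f : T => f (Tagged (fun s => {ffun 'I_(ar s) -> bool}) (finfun w))) E.
  rewrite !ffunE /= => E1; move: (bdec_eqP E1).
  have -> : pat (finfun w) x y = pat w x y.
    by apply: functional_extensionality => j; rewrite /pat ffunE.
  have -> : pat (finfun w) u v = pat w u v.
    by apply: functional_extensionality => j; rewrite /pat ffunE.
  done.
- move=> H; apply/ffunP => k; rewrite !ffunE; apply: bdec_eq; exact: H.
Qed.

Lemma emb_id (A : struct ar) : embedding (fun x : car A => x).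
Proof. split; first by move=> x y. by move=> s t. Qed.

Lemma emb_comp (A B D : struct ar) (f : car A -> car B) (g : car B -> car D) :
  embedding f -> embedding g -> embedding (g \o f).
Proof.
move=> [fi fr] [gi gr]; split; first exact: inj_comp.
move=> s t; rewrite (fr s t); exact: (gr s (f \o t)).
Qed.

Lemma typ_emb (A B : struct ar) (f : car A -> car B) (x y : car A) :
  embedding f -> typ (f x) (f y) = typ x y.
Proof.
move=> [fi fr]; apply/typP => s w.
rewrite (fr s (pat w x y)).
have -> : f \o pat w x y = pat w (f x) (f y).
  by apply: functional_extensionality => j; rewrite /pat /=; case: (w j).
exact: iff_refl.
Qed.

Lemma pat_neg (X : Type) n (w : 'I_n -> bool) (x y : X) :
  pat w y x = pat (negb \o w) x y.
Proof. by apply: functional_extensionality => j; rewrite /pat /=; case: (w j). Qed.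

Lemma typ_swap (A B : struct ar) (x y : car A) (u v : car B) :
  typ x y = typ u v -> typ y x = typ v u.
Proof.
move/typP=> H; apply/typP => s w; rewrite (pat_neg w x y) (pat_neg w u v); exact: H.
Qed.

Variable M : struct ar.

Definition Sub (S : car M -> Prop) : struct ar :=
  @Struct L ar {z : car M | S z}
    (fun s (t : 'I_(ar s) -> {z : car M | S z}) => srel (fun j => proj1_sig (t j))).

Lemma val_emb (S : car M -> Prop) : embedding (fun a : car (Sub S) => proj1_sig a).
Proof.
split.
- move=> [a ha] [b hb] /= E; subst b; f_equal; apply: proof_irrelevance.
- move=> s t; exact: iff_refl.
Qed.


Definition S2 (x y : car M) : car M -> Prop := fun z => z = x \/ z = y.

Lemma rigid_typ (x y : car M) : rigid (Sub (S2 x y)) -> typ x y = typ y x -> x = y.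
Proof.
move=> hr /typP H.
apply: NNPP => nxy.
pose x' : car (Sub (S2 x y)) := exist _ x (or_introl erefl).
pose y' : car (Sub (S2 x y)) := exist _ y (or_intror erefl).
pose sw (a : car (Sub (S2 x y))) := if bdec (proj1_sig a = x) then y' else x'.
have bxx : bdec (x = x) = true by apply/bdec_true.
have byx : bdec (y = x) = false by apply/bdec_false => E; apply: nxy; rewrite E.
have swv : forall a, proj1_sig (sw a) = if bdec (proj1_sig a = x) then y else x.
  by move=> a; rewrite /sw; case: (bdec _).
have swK : cancel sw sw.
  move=> a; apply: (proj1 (val_emb (S2 x y))); rewrite /= !swv.
  case: a => z [hz|hz] /=; rewrite hz ?bxx ?byx /= ?byx ?bxx; reflexivity.
have aut : automorphism sw.
  split; last by exists sw.
  split; first exact: (can_inj swK).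
  move=> s t.
  pose w j := bdec (proj1_sig (t j) = x).
  change (srel (fun j => proj1_sig (t j)) <-> srel (fun j => proj1_sig ((sw \o t) j))).
  have -> : (fun j => proj1_sig (t j)) = pat w x y.
    apply: functional_extensionality => j; rewrite /pat /w.
    case: (t j) => z [hz|hz] /=; rewrite hz ?bxx ?byx; reflexivity.
  have -> : (fun j => proj1_sig ((sw \o t) j)) = pat w y x.
    apply: functional_extensionality => j; rewrite /pat /w /= swv; reflexivity.
  exact: H.
have := hr sw aut x'.
rewrite /sw /= bxx => E.
apply: nxy; have := congr1 (fun a => proj1_sig a) E; simpl => <-; reflexivity.
Qed.

Lemma fin2 (x y : car M) : finite_set (S2 x y).
Proof.
exists 2, (fun i : 'I_2 => if val i == 0 then x else y).
move=> z [->|->].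
- exists ord0; reflexivity.
- exists (@Ordinal 2 1 isT); reflexivity.
Qed.

Lemma two_S2 (x y : car M) : x <> y -> two_elements (Sub (S2 x y)).
Proof.
move=> nxy.
exists (exist _ x (or_introl erefl)), (exist _ y (or_intror erefl)); split.
- move=> E; apply: nxy; have := congr1 (fun a => proj1_sig a) E; simpl => ->; reflexivity.
- move=> [z [hz|hz]]; [left|right]; subst z; f_equal; apply: proof_irrelevance.
Qed.

Lemma fin_list (X : Type) (d : X) (ws : seq X) : finite_set (fun z => List.In z ws).
Proof.
exists (size ws), (fun i => nth d ws i).
elim: ws => [|a ws IH] z /=; first by [].
move=> [<-|hz].
- exists (Ordinal (ltn0Sn (size ws))); reflexivity.
- have [[i hi] hi'] := IH z hz.
  exists (@Ordinal (size ws).+1 i.+1 hi); exact: hi'.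
Qed.

Lemma inseq (X : eqType) (x : X) (s : seq X) : x \in s -> List.In x s.
Proof.
elim: s => [|a s IH] //=; rewrite in_cons => /orP [/eqP ->|/IH]; [left|right] => //.
Qed.

Definition ftrue : formula ar := @FEq L ar 0 0.
Definition lit (t : T) (k : K) : formula ar :=
  if t k then FRel (s := tag k) (fun j => if tagged k j then 0 else 1)
  else FNot (FRel (s := tag k) (fun j => if tagged k j then 0 else 1)).
Definition ftyp (t : T) : formula ar :=
  foldr (fun k f => FAnd (lit t k) f) ftrue (enum K).
Definition fset (P : {set T}) : formula ar :=
  foldr (fun t f => FOr (ftyp t) f) (FNot ftrue) (enum P).

Lemma sat_and (A : struct ar) (e : nat -> car A) (I : eqType) (s : seq I)
  (F : I -> formula ar) :
  sat e (foldr (fun k f => FAnd (F k) f) ftrue s) <-> forall k, k \in s -> sat e (F k).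
Proof.
elim: s => [|a s IH] /=.
- split=> // _; reflexivity.
- split.
  + move=> [h1 h2] k; rewrite in_cons => /orP [/eqP -> //|hk].
    exact: (proj1 IH h2 k hk).
  + move=> H; split; first by apply: H; rewrite in_cons eqxx.
    apply/IH => k hk; apply: H; rewrite in_cons hk orbT; reflexivity.
Qed.

Lemma sat_or (A : struct ar) (e : nat -> car A) (I : eqType) (s : seq I)
  (F : I -> formula ar) :
  sat e (foldr (fun k f => FOr (F k) f) (FNot ftrue) s) <-> exists k, k \in s /\ sat e (F k).
Proof.
elim: s => [|a s IH] /=.
- split; first by move=> h; exfalso; apply: h; reflexivity.
  by move=> [k [hk _]].
- split.
  + move=> [h1|h2].
    * exists a; split=> //; rewrite in_cons eqxx; reflexivity.
    * have [k [hk hs]] := proj1 IH h2; exists k; split=> //; rewrite in_cons hk orbT; reflexivity.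
  + move=> [k [hk hs]]; move: hk; rewrite in_cons => /orP [/eqP E|hk].
    * by left; rewrite -E.
    * right; apply/IH; exists k; split=> //.
Qed.

Lemma sat_lit (A : struct ar) (x y : car A) s (w : 'I_(ar s) -> bool) :
  sat (env2 x y) (FRel (s := s) (fun j => if w j then 0 else 1)) <-> srel (pat w x y).
Proof.
simpl.
have -> : (fun j => env2 x y (if w j then 0 else 1)) = pat w x y.
  by apply: functional_extensionality => j; rewrite /pat; case: (w j).
exact: iff_refl.
Qed.

Lemma sat_ftyp (x y : car M) t : sat (env2 x y) (ftyp t) <-> typ x y = t.
Proof.
rewrite /ftyp; split.
- move/sat_and => H; apply/ffunP => k; rewrite ffunE.
  have := H k (mem_enum K k).
  rewrite /lit; case: (t k) => hk.
  + apply/bdec_true; exact: (proj1 (sat_lit _ _ _) hk).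
  + apply/bdec_false => hs; apply: hk; exact: (proj2 (sat_lit _ _ _) hs).
- move=> <-; apply/sat_and => k _; rewrite /lit ffunE.
  case E: (bdec _).
  + apply/sat_lit; exact/bdec_true.
  + move/bdec_false: E => E /sat_lit; exact: E.
Qed.

Lemma sat_fset (x y : car M) (P : {set T}) : sat (env2 x y) (fset P) <-> typ x y \in P.
Proof.
rewrite /fset; split.
- move/sat_or => [t [ht /sat_ftyp ->]]; by rewrite mem_enum in ht.
- move=> hP; apply/sat_or; exists (typ x y); split; first by rewrite mem_enum.
  exact/sat_ftyp.
Qed.

End Dev.

Section Ramsey.
Variables (L : finType) (ar : L -> nat) (M : struct ar) (C : struct ar -> Prop).
Hypothesis hage : age_is M C.
Variable h : car M -> nat.
Hypothesis hinj : injective h.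
Hypothesis hrig : forall A, C A -> rigid A.
Hypothesis notb : ~ exists A B : struct ar, C A /\ C B /\ two_elements A /\ not_ramsey_witness C A B.

Lemma subC (S : car M -> Prop) : finite_set S -> (exists z, S z) -> C (Sub S).
Proof.
move=> [n [g hg]] [z0 hz0]; apply: (proj2 (hage _)); split; last split.
- exists n.
  exists (fun i => match excluded_middle_informative (S (g i)) with
                   | left hh => exist S (g i) hh | right _ => exist S z0 hz0 end).
  move=> [z hz] _; have [i hi] := hg z hz; exists i.
  case: excluded_middle_informative => [hh|hh].
  + subst z; f_equal; apply: proof_irrelevance.
  + exfalso; apply: hh; rewrite hi; exact: hz.
- constructor; exact: (exist S z0 hz0).
- exists (fun a => proj1_sig a); exact: val_emb.
Qed.

Definition img (B : struct ar) (G : car B -> car M) (u : car M) : Prop := exists b, G b = u.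

Definition consistent (t : T ar) (U : car M -> Prop) : Prop :=
  forall u v u' v', U u -> U v -> U u' -> U v' -> u <> v ->
    typ u v = t -> typ u' v' = t -> h u < h v -> h u' < h v'.

Lemma consistent_sub t (U V : car M -> Prop) :
  (forall z, U z -> V z) -> consistent t V -> consistent t U.
Proof.
move=> sub H u v u' v' hu hv hu' hv'; apply: H; apply: sub; assumption.
Qed.

Lemma R1 (t : T ar) (B : struct ar) : C B -> exists D, C D /\
  forall e : car D -> car M, embedding e ->
    exists g : car B -> car D, embedding g /\ consistent t (img (e \o g)).
Proof.
move=> CB.
destruct (classic (exists u0 v0 : car M, u0 <> v0 /\ typ u0 v0 = t)) as [[u0 [v0 [nuv tuv]]]|nex]; last first.
  exists B; split; first exact: CB.
  move=> e he; exists (fun x => x); split; first exact: emb_id.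
  move=> u v u' v' _ _ _ _ nuv tuv; exfalso; apply: nex; exists u, v; split; assumption.
pose A := Sub (S2 u0 v0).
have CA : C A := subC (fin2 u0 v0) (ex_intro _ u0 (or_introl erefl)).
have tA : two_elements A := two_S2 nuv.
have nw : ~ not_ramsey_witness C A B.
  move=> w; apply: notb; exists A, B; split; first exact: CA.
  split; first exact: CB. split; first exact: tA. exact: w.
have [D [CD HD]] : exists D, C D /\ forall chi : (car A -> car D) -> bool,
    exists g : car B -> car D, embedding g /\
    forall f1 f2 : car A -> car D, embedding f1 -> embedding f2 ->
      (forall a, exists b, f1 a = g b) -> (forall a, exists b, f2 a = g b) -> chi f1 = chi f2.
  apply: NNPP => hn; apply: nw => D CD.
  apply: NNPP => hn2; apply: hn; exists D; split; first exact: CD.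
  move=> chi; apply: NNPP => hn3; apply: hn2; exists chi => g hg.
  apply: NNPP => hn4; apply: hn3; exists g; split; first exact: hg.
  move=> f1 f2 h1 h2 i1 i2.
  apply: NNPP => hn5; apply: hn4; exists f1, f2; split; first exact: h1.
  split; first exact: h2. split; first exact: i1. split; first exact: i2. exact: hn5.
exists D; split; first exact: CD.
move=> e he.
pose a0 : car A := exist _ u0 (or_introl erefl).
pose b0 : car A := exist _ v0 (or_intror erefl).
pose chi (f : car A -> car D) := h (e (f a0)) < h (e (f b0)).
have [g [hg Hg]] := HD chi.
exists g; split; first exact: hg.
have buu : bdec (u0 = u0) = true by apply/bdec_true.
have bvu : bdec (v0 = u0) = false by apply/bdec_false => E; apply: nuv; rewrite E.
pose mk (c1 c2 : car D) : car A -> car D :=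
  fun a => if bdec (proj1_sig a = u0) then c1 else c2.
have valA : forall a : car A, proj1_sig a = if bdec (proj1_sig a = u0) then u0 else v0.
  move=> [z [hz|hz]] /=; rewrite hz ?buu ?bvu; reflexivity.
have mk_emb : forall c1 c2, c1 <> c2 -> typ (e c1) (e c2) = t -> embedding (mk c1 c2).
  move=> c1 c2 n12 t12; split.
  - move=> a a'; rewrite /mk => E.
    have Eb : bdec (proj1_sig a = u0) = bdec (proj1_sig a' = u0).
      move: E; case: (bdec (proj1_sig a = u0)); case: (bdec (proj1_sig a' = u0)) => //.
      move=> E0; exfalso; apply: n12; rewrite E0; reflexivity.
    apply: (proj1 (val_emb (S2 u0 v0))); rewrite /= (valA a) (valA a') Eb; reflexivity.
  - move=> s t'.
    pose w j := bdec (proj1_sig (t' j) = u0).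
    have he' := (proj2 he) s (mk c1 c2 \o t').
    change (srel (fun j => proj1_sig (t' j)) <-> srel (mk c1 c2 \o t')).
    have -> : (fun j => proj1_sig (t' j)) = pat w u0 v0.
      apply: functional_extensionality => j; rewrite /pat /w; exact: valA.
    have E2 : e \o (mk c1 c2 \o t') = pat w (e c1) (e c2).
      apply: functional_extensionality => j; rewrite /pat /w /mk /=.
      case: (bdec _); reflexivity.
    rewrite E2 in he'.
    have tt : typ u0 v0 = typ (e c1) (e c2) by rewrite tuv t12.
    have := proj1 (typP _ _ _ _) tt s w.
    move: he'; clear; tauto.
move=> u v u' v' [b1 <-] [b2 <-] [b1' <-] [b2' <-] nuv' tuv' tuv'' hlt.
have n12 : g b1 <> g b2 by move=> E; apply: nuv'; rewrite /= E.
have n12' : g b1' <> g b2'.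
  move=> E; apply: nuv; apply: (rigid_typ (hrig CA)).
  have E1 : typ u0 v0 = typ (e (g b1')) (e (g b1')).
    by rewrite tuv -tuv'' /= E.
  rewrite E1; symmetry; exact: (typ_swap E1).
have imk : forall c1 c2 b1 b2, c1 = g b1 -> c2 = g b2 ->
    forall a, exists b, mk c1 c2 a = g b.
  move=> c1 c2 d1 d2 -> -> a; rewrite /mk; case: (bdec _); [exists d1|exists d2]; reflexivity.
have E1 := Hg (mk (g b1) (g b2)) (mk (g b1') (g b2'))
  (mk_emb _ _ n12 tuv') (mk_emb _ _ n12' tuv'')
  (imk _ _ b1 b2 erefl erefl) (imk _ _ b1' b2' erefl erefl).
move: E1; rewrite /chi /mk /= buu bvu => E1.
have hlt' : (h (e (g b1)) < h (e (g b2))) = true := hlt.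
rewrite E1 in hlt'; exact: hlt'.
Qed.


Lemma Rall (l : seq (T ar)) (B : struct ar) : C B -> exists D, C D /\
  forall e : car D -> car M, embedding e ->
    exists g : car B -> car D, embedding g /\
      forall t, t \in l -> consistent t (img (e \o g)).
Proof.
elim: l B => [|t l IH] B CB.
- exists B; split; first exact: CB.
  move=> e he; exists (fun x => x); split; first exact: emb_id.
  by move=> t.
- have [D1 [CD1 H1]] := IH B CB.
  have [D [CD H]] := R1 t CD1.
  exists D; split; first exact: CD.
  move=> e he.
  have [g' [hg' Hg']] := H e he.
  have [g [hg Hg]] := H1 (e \o g') (emb_comp hg' he).
  exists (g' \o g); split; first exact: emb_comp.
  move=> t0; rewrite in_cons => /orP [/eqP -> | ht0].
  + apply: (consistent_sub _ Hg') => z [b <-]; exists (g b); reflexivity.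
  + apply: (consistent_sub _ (Hg t0 ht0)) => z [b <-]; exists b; reflexivity.
Qed.

Definition bad (R : car M -> car M -> Prop) (ws : seq (car M)) : Prop :=
  (exists x, List.In x ws /\ R x x) \/
  (exists x y z, List.In x ws /\ List.In y ws /\ List.In z ws /\ R x y /\ R y z /\ ~ R x z) \/
  (exists x y, List.In x ws /\ List.In y ws /\ x <> y /\ ~ R x y /\ ~ R y x).

Lemma bad_ex (R : car M -> car M -> Prop) : ~ strict_total_order R -> exists ws, bad R ws.
Proof.
move=> hn; apply: NNPP => hb; apply: hn; split; [|split].
- move=> x hx; apply: hb; exists [:: x]; left; exists x; simpl; intuition.
- move=> x y z hxy hyz; apply: NNPP => hxz; apply: hb; exists [:: x; y; z].
  right; left; exists x, y, z; simpl; intuition.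
- move=> x y nxy; apply: NNPP => hh; apply: hb; exists [:: x; y].
  right; right; exists x, y; simpl; intuition.
Qed.

Lemma final (m0 : car M) : ~ has_definable_total_order M -> False.
Proof.
move=> hna.
have hbad : forall P : {set T ar}, exists ws, bad (fun x y => sat (env2 x y) (fset P)) ws.
  move=> P; apply: bad_ex => hs; apply: hna; exists (fset P); exact: hs.
pose W := fun P => proj1_sig (constructive_indefinite_description _ (hbad P)).
have WP : forall P, bad (fun x y => sat (env2 x y) (fset P)) (W P) :=
  fun P => proj2_sig (constructive_indefinite_description _ (hbad P)).
pose ws := m0 :: List.flat_map W (enum {set T ar}).
pose S := fun z => List.In z ws.
have inW : forall P z, List.In z (W P) -> S z.
  move=> P z hz; right; apply/List.in_flat_map; exists P; split; last exact: hz.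
  apply: inseq; rewrite mem_enum; reflexivity.
have CB : C (Sub S) := subC (fin_list m0 ws) (ex_intro _ m0 (or_introl erefl)).
have [D [CD HD]] := Rall (enum (T ar)) CB.
have [_ [_ [e he]]] := proj1 (hage D) CD.
have [g [hg Hg]] := HD e he.
pose G := e \o g.
have hG : embedding G := emb_comp hg he.
pose P := [set t | bdec (exists u v, img G u /\ img G v /\ u <> v /\ typ u v = t /\ h u < h v)].
have key : forall x y (hx : S x) (hy : S y),
    sat (env2 x y) (fset P) <-> h (G (exist S x hx)) < h (G (exist S y hy)).
  move=> x y hx hy.
  have tE : typ x y = typ (G (exist S x hx)) (G (exist S y hy)).
    rewrite (typ_emb _ _ hG). exact: (typ_emb (A := Sub S) (exist S x hx) (exist S y hy) (val_emb S)).
  split.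
  - move/sat_fset; rewrite inE => /bdec_true [u [v [iu [iv [nuv [tuv huv]]]]]].
    apply: (Hg (typ u v) _ u v _ _ iu iv _ _ nuv erefl _ huv).
    + by rewrite mem_enum.
    + exists (exist S x hx); reflexivity.
    + exists (exist S y hy); reflexivity.
    + rewrite -tE; symmetry; exact: tuv.
  - move=> hlt; apply/sat_fset; rewrite inE; apply/bdec_true.
    exists (G (exist S x hx)), (G (exist S y hy)).
    split; first by exists (exist S x hx).
    split; first by exists (exist S y hy).
    split; first by move=> E; rewrite E ltnn in hlt.
    split; first by rewrite tE.
    exact: hlt.
have inS := inW P.
case: (WP P) => [[x [hx hxx]] | [[x [y [z [hx [hy [hz [hxy [hyz hxz]]]]]]]] | [x [y [hx [hy [nxy [n1 n2]]]]]]]].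
- have := proj1 (key x x (inS _ hx) (inS _ hx)) hxx; by rewrite ltnn.
- apply: hxz; apply/(key x z (inS _ hx) (inS _ hz)).
  exact: (ltn_trans (proj1 (key x y (inS _ hx) (inS _ hy)) hxy)
                    (proj1 (key y z (inS _ hy) (inS _ hz)) hyz)).
- have hne : h (G (exist S x (inS _ hx))) != h (G (exist S y (inS _ hy))).
    apply/eqP => E; apply: nxy.
    have := proj1 hG _ _ (hinj E); move=> E2.
    have := congr1 (fun a => proj1_sig a) E2; simpl => ->; reflexivity.
  case: (ltngtP (h (G (exist S x (inS _ hx)))) (h (G (exist S y (inS _ hy))))) => hc.
  + apply: n1; exact: (proj2 (key _ _ _ _) hc).
  + apply: n2; exact: (proj2 (key _ _ _ _) hc).
  + by rewrite hc eqxx in hne.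
Qed.

End Ramsey.

Theorem theorem1p5 (L : finType) (ar : L -> nat)
    (C : struct ar -> Prop) (M : struct ar) :
  fraisse_class C -> fraisse_limit C M ->
  (forall A, C A -> rigid A) ->
  has_definable_total_order M \/
  exists A B : struct ar, C A /\ C B /\ two_elements A /\ not_ramsey_witness C A B.
Proof.
move=> hF [[h hinj] [_ hage]] hrig.
destruct (classic (exists A B : struct ar, C A /\ C B /\ two_elements A /\ not_ramsey_witness C A B)) as [hb|hnb].
  by right.
destruct (classic (has_definable_total_order M)) as [ha|hna].
  by left.
exfalso.
destruct (classic (inhabited (car M))) as [[m0]|hne].
- exact: (final hage hinj hrig hnb m0 hna).
- apply: hna; exists (@FEq L ar 0 0); split; [|split] => x; exfalso; apply: hne; constructor; exact: x.
Qed.
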